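(* For every connected graph $G$, $\gamma_{rdR}(G)\ge \gamma(G)+\gamma_r(G)$. Moreover, equality holds if and only if $G$ is a star $K_{1,m}$ for some $m\ge 1$, or $\gamma_{r2}(G)=\gamma_r(G)=\gamma(G)$.
   Context: All graphs are finite and simple. An RDRD function of $G$ is a function $f:V(G)\to\{0,1,2,3\}$ such that every vertex with value $0$ has at least two neighbors with value $2$ or at least one neighbor with value $3$, every vertex with value $1$ has a neighbor with value $2$ or $3$, and the subgraph induced by the vertices with value $0$ has no isolated vertices; $\gamma_{rdR}(G)$ is the minimum of $\sum_v f(v)$ over RDRD functions. $\gamma(G)$ is the domination number. A restrained dominating set is a set $S\subseteq V(G)$ such that every vertex of $V(G)\setminus S$ has a neighbor in $S$ and a neighbor in $V(G)\setminus S$; $\gamma_r(G)$ is its minimum cardinality. A restrained $2$-dominating set is a set $S$ such that every vertex of $V(G)\setminus S$ has at least two neighbors in $S$ and $G[V(G)\setminus S]$ has no isolated vertices; $\gamma_{r2}(G)$ is its minimum cardinality. *)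

(* Defs.v *)
From mathcomp Require Import all_boot.
Set Implicit Arguments. Unset Strict Implicit. Unset Printing Implicit Defensive.

Definition simple_graph (T : finType) (e : rel T) : Prop :=
  symmetric e /\ irreflexive e.

Definition connected_graph (T : finType) (e : rel T) : Prop :=
  0 < #|T| /\ forall x y : T, connect e x y.

Definition nbhd (T : finType) (e : rel T) (v : T) : {set T} := [set u | e v u].

Definition is_rdrd (T : finType) (e : rel T) (f : {ffun T -> 'I_4}) : bool :=
  [forall v,
     ((f v == 0 :> nat) ==>
        ((2 <= #|[set u in nbhd e v | f u == 2 :> nat]|) ||
         [exists u in nbhd e v, f u == 3 :> nat]))
  && ((f v == 1 :> nat) ==> [exists u in nbhd e v, 2 <= f u])
  && ((f v == 0 :> nat) ==> [exists u in nbhd e v, f u == 0 :> nat])].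

Definition weight (T : finType) (f : {ffun T -> 'I_4}) : nat := \sum_(v : T) f v.

(* minimum weight of an RDRD function (the constant function 3 is RDRD, of
   weight 3|V|, so the default value never affects the minimum) *)
Definition gamma_rdR (T : finType) (e : rel T) : nat :=
  \big[minn/(3 * #|T|)]_(f : {ffun T -> 'I_4} | is_rdrd e f) weight f.

Definition is_dominating (T : finType) (e : rel T) (S : {set T}) : bool :=
  [forall v, (v \notin S) ==> [exists u in S, e v u]].

Definition is_restrained_dominating (T : finType) (e : rel T) (S : {set T}) : bool :=
  [forall v, (v \notin S) ==>
     ([exists u in S, e v u] && [exists u in ~: S, e v u])].

Definition is_restrained_2dominating (T : finType) (e : rel T) (S : {set T}) : bool :=
  [forall v, (v \notin S) ==>
     ((2 <= #|S :&: nbhd e v|) && [exists u in ~: S, e v u])].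

(* minima of cardinalities (V itself qualifies in each case) *)
Definition gamma (T : finType) (e : rel T) : nat :=
  \big[minn/#|T|]_(S : {set T} | is_dominating e S) #|S|.
Definition gamma_r (T : finType) (e : rel T) : nat :=
  \big[minn/#|T|]_(S : {set T} | is_restrained_dominating e S) #|S|.
Definition gamma_r2 (T : finType) (e : rel T) : nat :=
  \big[minn/#|T|]_(S : {set T} | is_restrained_2dominating e S) #|S|.

Definition is_star (T : finType) (e : rel T) : Prop :=
  2 <= #|T| /\
  exists c : T, (forall v, v != c -> e c v) /\
                (forall u v, u != c -> v != c -> ~~ e u v).

(* Main.v *)
Require Import Defs.
From mathcomp Require Import all_boot zify.
Set Implicit Arguments. Unset Strict Implicit. Unset Printing Implicit Defensive.


Lemma bigmin_le_seq (I : eqType) (r : seq I) (P : pred I) (F : I -> nat) d i :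
  i \in r -> P i -> \big[minn/d]_(j <- r | P j) F j <= F i.
Proof.
elim: r => // j r IH; rewrite in_cons big_cons => /orP [/eqP <- | ir] Pi.
  by rewrite Pi geq_minl.
case: (P j); last exact: IH.
exact: leq_trans (geq_minr _ _) (IH ir Pi).
Qed.

Lemma bigmin_le (I : finType) (P : pred I) (F : I -> nat) d i :
  P i -> \big[minn/d]_(j | P j) F j <= F i.
Proof. by apply: bigmin_le_seq; rewrite mem_index_enum. Qed.

Lemma bigmin_cases (I : finType) (P : pred I) (F : I -> nat) d :
  \big[minn/d]_(j | P j) F j = d \/
  exists i, P i /\ \big[minn/d]_(j | P j) F j = F i.
Proof.
apply: (big_rec (fun x => x = d \/ exists i, P i /\ x = F i)); first by left.
move=> i x Pi Kx; rewrite /minn; case: ltnP => _; first by right; exists i.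
exact: Kx.
Qed.

Lemma bigmin_le_d (I : finType) (P : pred I) (F : I -> nat) d :
  \big[minn/d]_(j | P j) F j <= d.
Proof.
by apply: (big_rec (fun x => x <= d)) => // i x _ h; exact: leq_trans (geq_minr _ _) h.
Qed.

Lemma bigmin_attain (I : finType) (P : pred I) (F : I -> nat) d i0 :
  P i0 -> F i0 = d -> exists i, P i /\ \big[minn/d]_(j | P j) F j = F i.
Proof.
move=> Pi0 Fi0; case: (bigmin_cases P F d) => [->|//]; by exists i0.
Qed.

Lemma closed_conn (T : finType) (e : rel T) (A : {set T}) :
  (forall t s, t \in A -> e t s -> s \in A) ->
  forall x y, x \in A -> connect e x y -> y \in A.
Proof.
move=> hA x y xA /connectP [p]; elim: p x xA => [|z p IH] x xA /=.
  by move=> _ ->.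
by move=> /andP [exz pth] Hy; exact: IH z (hA _ _ xA exz) pth Hy.
Qed.

Lemma sum_ind (T : finType) (b : pred T) :
  \sum_(v : T) (b v : nat) = #|[set v | b v]|.
Proof.
rewrite -sum1_card [RHS]big_mkcond /=; apply: eq_bigr => v _; rewrite inE.
by case: (b v).
Qed.

Definition S1 (T : finType) (f : {ffun T -> 'I_4}) := [set v | 0 < f v].
Definition S2 (T : finType) (f : {ffun T -> 'I_4}) := [set v | 1 < f v].
Definition S3 (T : finType) (f : {ffun T -> 'I_4}) := [set v | 2 < f v].


Lemma rdrd_zero_dom (T : finType) (e : rel T) f v :
  is_rdrd e f -> f v = 0 :> nat -> exists u, e v u /\ 2 <= f u.
Proof.
move=> /forallP /(_ v) /andP [/andP [h _] _] fv; move: h; rewrite fv /=.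
case/orP => [h | /existsP [u /andP [un /eqP fu]]].
  have : 0 < #|[set u in nbhd e v | f u == 2 :> nat]| by apply: leq_trans h.
  case/card_gt0P => u; rewrite !inE => /andP [evu /eqP fu].
  by exists u; rewrite evu fu.
by exists u; move: un; rewrite inE => ->; rewrite fu.
Qed.

Lemma rdrd_zero_zero (T : finType) (e : rel T) f v :
  is_rdrd e f -> f v = 0 :> nat -> exists u, e v u /\ f u = 0 :> nat.
Proof.
move=> /forallP /(_ v) /andP [_ h] fv; move: h; rewrite fv /=.
by case/existsP => u /andP [un /eqP fu]; exists u; move: un; rewrite inE => ->.
Qed.

Lemma rdrd_one (T : finType) (e : rel T) f v :
  is_rdrd e f -> f v = 1 :> nat -> exists u, e v u /\ 2 <= f u.
Proof.
move=> /forallP /(_ v) /andP [/andP [_ h] _] fv; move: h; rewrite fv /=.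
by case/existsP => u /andP [un fu]; exists u; move: un; rewrite inE => ->.
Qed.

Lemma rdrd_zero_two (T : finType) (e : rel T) f v :
  is_rdrd e f -> (forall u, f u != 3 :> nat) -> f v = 0 :> nat ->
  2 <= #|[set u in nbhd e v | f u == 2 :> nat]|.
Proof.
move=> /forallP /(_ v) /andP [/andP [h _] _] no3 fv; move: h; rewrite fv /=.
case/orP => [//| /existsP [u /andP [_ fu]]].
by move: (no3 u); rewrite fu.
Qed.

Lemma weight_split (T : finType) (f : {ffun T -> 'I_4}) :
  weight f = #|S1 f| + #|S2 f| + #|S3 f|.
Proof.
rewrite /weight /S1 /S2 /S3 -!sum_ind -!big_split /=; apply: eq_bigr => v _.
have := ltn_ord (f v); case: (nat_of_ord (f v)) => [|[|[|[|]]]] //.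
Qed.

Lemma S2_dom (T : finType) (e : rel T) f : is_rdrd e f -> is_dominating e (S2 f).
Proof.
move=> hf; apply/forallP => v; apply/implyP; rewrite inE -leqNgt => fv.
have [u [evu fu]] : exists u, e v u /\ 2 <= f u.
  move: fv; case fv: (nat_of_ord (f v)) => [|[|]] // _.
    exact: rdrd_zero_dom fv.
  exact: rdrd_one fv.
by apply/existsP; exists u; rewrite inE evu andbT.
Qed.

Lemma S1_rdom (T : finType) (e : rel T) f : is_rdrd e f -> is_restrained_dominating e (S1 f).
Proof.
move=> hf; apply/forallP => v; apply/implyP; rewrite inE -leqNgt leqn0 => /eqP fv.
have [u [evu fu]] := rdrd_zero_dom hf fv.
have [w [evw fw]] := rdrd_zero_zero hf fv.
apply/andP; split; apply/existsP.
  by exists u; rewrite inE evu andbT; apply: leq_trans fu.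
by exists w; rewrite !inE evw fw.
Qed.

Lemma gamma_le (T : finType) (e : rel T) S : is_dominating e S -> gamma e <= #|S|.
Proof. by move=> h; rewrite /gamma; apply: bigmin_le. Qed.
Lemma gamma_r_le (T : finType) (e : rel T) S : is_restrained_dominating e S -> gamma_r e <= #|S|.
Proof. by move=> h; rewrite /gamma_r; apply: bigmin_le. Qed.
Lemma gamma_r2_le (T : finType) (e : rel T) S : is_restrained_2dominating e S -> gamma_r2 e <= #|S|.
Proof. by move=> h; rewrite /gamma_r2; apply: bigmin_le. Qed.
Lemma gamma_rdR_le (T : finType) (e : rel T) f : is_rdrd e f -> gamma_rdR e <= weight f.
Proof. by move=> h; rewrite /gamma_rdR; apply: bigmin_le. Qed.

Lemma gamma_r_attain (T : finType) (e : rel T) :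
  exists S, is_restrained_dominating e S /\ gamma_r e = #|S|.
Proof.
apply: (bigmin_attain (i0 := setT)); last exact: cardsT.
by apply/forallP => v; rewrite inE.
Qed.
Lemma gamma_r2_attain (T : finType) (e : rel T) :
  exists S, is_restrained_2dominating e S /\ gamma_r2 e = #|S|.
Proof.
apply: (bigmin_attain (i0 := setT)); last exact: cardsT.
by apply/forallP => v; rewrite inE.
Qed.
Lemma gamma_attain (T : finType) (e : rel T) :
  exists S, is_dominating e S /\ gamma e = #|S|.
Proof.
apply: (bigmin_attain (i0 := setT)); last exact: cardsT.
by apply/forallP => v; rewrite inE.
Qed.

Lemma gamma_le_r (T : finType) (e : rel T) : gamma e <= gamma_r e.
Proof.
have [S [hS ->]] := gamma_r_attain e; apply: gamma_le.
apply/forallP => v; apply/implyP => vS.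
by move/forallP/(_ v): hS; rewrite vS /= => /andP [].
Qed.

Lemma gamma_r_le_r2 (T : finType) (e : rel T) : gamma_r e <= gamma_r2 e.
Proof.
have [S [hS ->]] := gamma_r2_attain e; apply: gamma_r_le.
apply/forallP => v; apply/implyP => vS.
move/forallP/(_ v): hS; rewrite vS /= => /andP [h ->]; rewrite andbT.
have : 0 < #|S :&: nbhd e v| by apply: leq_trans h.
by case/card_gt0P => u; rewrite !inE => /andP [uS evu]; apply/existsP; exists u; rewrite uS.
Qed.

Lemma ineq_f (T : finType) (e : rel T) f :
  is_rdrd e f -> gamma e + gamma_r e <= #|S1 f| + #|S2 f|.
Proof.
move=> hf; have := gamma_le (S2_dom hf); have := gamma_r_le (S1_rdom hf); lia.
Qed.

Lemma lemma_a (T : finType) (e : rel T) f :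
  simple_graph e -> is_rdrd e f -> gamma_r e = #|S1 f| ->
  forall x y, f x = 1 :> nat -> e x y -> 2 <= f y.
Proof.
move=> [sym irr] hf hg x y fx exy; rewrite leqNgt; apply/negP => fy.
set R := S1 f :\: [set x; y].
have inR u : 2 <= f u -> u \in R.
  move=> fu; rewrite !inE negb_or; apply/andP; split; last by lia.
  apply/andP; split.
  - by apply/eqP => ux; move: fu; rewrite ux fx.
  - by apply/eqP => uy; move: fu; rewrite uy; lia.
have Rr : is_restrained_dominating e R.
  apply/forallP => t; apply/implyP => tR.
  case tS1: (0 < f t).
    have : t \in [set x; y] by move: tR; rewrite !inE tS1 andbT negbK.
    rewrite !inE => /orP [/eqP tx | /eqP ty]; [subst t|subst t].
      have [u [etu fu]] := rdrd_one hf fx.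
      apply/andP; split; apply/existsP; first by exists u; rewrite inR // etu.
      by exists y; rewrite !inE eqxx orbT /= exy.
    have fy1 : f y = 1 :> nat by lia.
    have [u [etu fu]] := rdrd_one hf fy1.
    apply/andP; split; apply/existsP; first by exists u; rewrite inR // etu.
    by exists x; rewrite !inE eqxx /= sym.
  have ft0 : f t = 0 :> nat by move: tS1; lia.
  have [u [etu fu]] := rdrd_zero_dom hf ft0.
  have [w [etw fw]] := rdrd_zero_zero hf ft0.
  apply/andP; split; apply/existsP; first by exists u; rewrite inR // etu.
  by exists w; rewrite !inE fw /= andbF etw.
have := gamma_r_le Rr; rewrite hg.
have := cardsID [set x; y] (S1 f).
have : 0 < #|S1 f :&: [set x; y]|.
  by apply/card_gt0P; exists x; rewrite !inE eqxx fx.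
rewrite -/R; lia.
Qed.

Lemma lemma_b (T : finType) (e : rel T) f :
  simple_graph e -> is_rdrd e f -> (forall u, f u != 3 :> nat) -> gamma_r e = #|S1 f| ->
  forall w z y, f w = 2 :> nat -> e w z -> 0 < f z -> e w y -> f y = 0 :> nat -> False.
Proof.
move=> [sym irr] hf no3 hg w z y fw ewz fz ewy fy.
set R := S1 f :\ w.
have Rr : is_restrained_dominating e R.
  apply/forallP => t; apply/implyP => tR.
  case tS1: (0 < f t).
    have tw : t = w by move: tR; rewrite !inE tS1 andbT negbK => /eqP.
    apply/andP; split; apply/existsP.
      exists z; rewrite !inE fz andbT tw ewz andbT.
      by apply/eqP => zw; move: ewz; rewrite zw irr.
    by exists y; rewrite !inE fy /= andbF tw ewy.
  have ft0 : f t = 0 :> nat by move: tS1; lia.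
  have := rdrd_zero_two hf no3 ft0; case/card_gt1P => a [b [ha hb ab]].
  have [u [uw hu]] : exists u, u != w /\ u \in [set u in nbhd e t | f u == 2 :> nat].
    case: (eqVneq a w) => [aw|aw]; last by exists a.
    by exists b; split => //; rewrite -aw eq_sym.
  have [v [etv fv]] := rdrd_zero_zero hf ft0.
  move: hu; rewrite !inE => /andP [etu /eqP fu].
  apply/andP; split; apply/existsP.
    by exists u; rewrite !inE uw etu fu andbT.
  by exists v; rewrite !inE fv /= andbF etv.
have := gamma_r_le Rr; rewrite hg.
have := cardsD1 w (S1 f); rewrite inE fw /= -/R; lia.
Qed.

Lemma all_pos (T : finType) (e : rel T) f :
  simple_graph e -> connected_graph e -> is_rdrd e f -> (forall u, f u != 3 :> nat) ->
  gamma_r e = #|S1 f| -> forall x, f x = 1 :> nat -> gamma_r e = #|T|.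
Proof.
move=> hs hc hf no3 hg x fx; have [sym irr] := hs.
set A := [set t | (f t == 1 :> nat) ||
                  ((f t == 2 :> nat) && [exists z in nbhd e t, 0 < f z])].
have hA : forall t s, t \in A -> e t s -> s \in A.
  move=> t s; rewrite !inE => /orP [/eqP ft | /andP [/eqP ft /existsP [z /andP [zn fz]]]] ets.
    have := lemma_a hs hf hg ft ets; have := no3 s; have := ltn_ord (f s).
    move=> h1 h2 h3; have -> : f s = 2 :> nat by lia.
    by apply/existsP; exists t; rewrite inE sym ets ft.
  move: zn; rewrite inE => etz.
  have fs0 : f s != 0 :> nat.
    by apply/eqP => fs; exact (lemma_b hs hf no3 hg ft etz fz ets fs).
  have := no3 s; have := ltn_ord (f s); move: fs0.
  case: (nat_of_ord (f s)) => [|[|[|[|]]]] //= _ _ _.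
  by apply/existsP; exists t; rewrite inE sym ets /= ft.
have S1T : S1 f = setT.
  apply/setP => t; rewrite !inE.
  have : t \in A by apply: (closed_conn hA (x := x)); [rewrite inE fx | exact: hc.2].
  by rewrite inE => /orP [/eqP -> | /andP [/eqP -> _]].
by rewrite hg S1T cardsT.
Qed.

Lemma leaf_edge (T : finType) (e : rel T) :
  simple_graph e -> gamma_r e = #|T| ->
  forall x y, e x y -> (forall a, e x a -> a = y) \/ (forall b, e y b -> b = x).
Proof.
move=> [sym irr] hg x y exy.
case: (boolP [exists a, e x a && (a != y)]) => [/existsP [a /andP [exa ay]] | hn];
  last by left => a exa; move/existsPn/(_ a): hn; rewrite exa /= negbK => /eqP.
case: (boolP [exists b, e y b && (b != x)]) => [/existsP [b /andP [eyb bx]] | hn];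
  last by right => b eyb; move/existsPn/(_ b): hn; rewrite eyb /= negbK => /eqP.
exfalso.
set R := ~: [set x; y].
have Rr : is_restrained_dominating e R.
  apply/forallP => t; apply/implyP; rewrite !inE negbK => /orP [/eqP -> | /eqP ->].
    apply/andP; split; apply/existsP.
      exists a; rewrite !inE negb_or ay andbT exa andbT.
      by apply/eqP => ax; move: exa; rewrite ax irr.
    by exists y; rewrite !inE eqxx orbT exy.
  apply/andP; split; apply/existsP.
    exists b; rewrite !inE negb_or bx eyb andbT /=.
    by apply/eqP => yb; move: eyb; rewrite yb irr.
  by exists x; rewrite !inE eqxx sym exy.
have := gamma_r_le Rr; rewrite hg.
have := cardsC [set x; y].
have : 0 < #|[set x; y]| by apply/card_gt0P; exists x; rewrite !inE eqxx.
rewrite -/R; lia.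
Qed.

Lemma star_of (T : finType) (e : rel T) :
  simple_graph e -> connected_graph e ->
  (forall x y, e x y -> (forall a, e x a -> a = y) \/ (forall b, e y b -> b = x)) ->
  forall v c, e v c -> (forall a, e v a -> a = c) -> is_star e.
Proof.
move=> [sym irr] hc H v c evc vleaf.
have vc : v != c by apply/eqP => vc; move: evc; rewrite vc irr.
have nleaf : forall u, e c u -> forall a, e u a -> a = c.
  move=> u ecu; case: (eqVneq u v) => [-> //|uv].
  case: (H c u ecu) => // hcu.
  have := hcu v; rewrite sym evc => /(_ isT) /eqP; by rewrite eq_sym (negbTE uv).
set A := c |: nbhd e c.
have hA : forall t s, t \in A -> e t s -> s \in A.
  move=> t s; rewrite !inE => /orP [/eqP -> | ect] ets.
    by rewrite ets orbT.
  by rewrite (nleaf t ect s ets) eqxx.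
have allA : forall t, t \in A by move=> t; apply: (closed_conn hA (x := c)); [rewrite !inE eqxx | exact: hc.2].
split.
  have := subset_leq_card (subsetT [set v; c]); rewrite cards2 vc cardsT //.
exists c; split.
  by move=> t tc; move: (allA t); rewrite !inE (negbTE tc).
move=> u w uc wc; apply/negP => euw.
have := allA u; rewrite !inE (negbTE uc) /= => ecu.
by move: (nleaf u ecu w euw) => /eqP; rewrite (negbTE wc).
Qed.

Lemma star_rev (T : finType) (e : rel T) :
  simple_graph e -> is_star e -> gamma_rdR e <= gamma e + gamma_r e.
Proof.
move=> [sym irr] [n2 [c [hc1 hc2]]].
have grT : gamma_r e = #|T|.
  have [R [hR ->]] := gamma_r_attain e.
  suff -> : R = setT by rewrite cardsT.
  apply/setP => v; rewrite inE; case vR: (v \in R) => //.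
  have /forallP/(_ v) := hR; rewrite vR /= => /andP [/existsP [u /andP [uR evu]] /existsP [x /andP [xR evx]]].
  move: xR; rewrite inE => xR.
  case: (eqVneq v c) => [vc | vc].
    have xc : x != c by apply/eqP => xc; move: evx; rewrite xc vc irr.
    have /forallP/(_ x) := hR; rewrite xR /= => /andP [/existsP [y /andP [yR exy]] _].
    case: (eqVneq y c) => [yc | yc]; first by move: yR; rewrite yc -vc vR.
    by move: (hc2 x y xc yc); rewrite exy.
  have uc : u = c by apply/eqP; apply: contraTT evu => uc; exact: hc2.
  have xc : x = c by apply/eqP; apply: contraTT evx => xc; exact: hc2.
  by move: uR xR; rewrite uc xc => ->.
have g1 : 1 <= gamma e.
  have [D [hD ->]] := gamma_attain e; apply/card_gt0P.
  case cD: (c \in D); first by exists c.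
  move/forallP/(_ c): hD; rewrite cD /= => /existsP [u /andP [uD _]]; by exists u.
set f : {ffun T -> 'I_4} := [ffun v => if v == c then (inord 2 : 'I_4) else inord 1].
have fE v : f v = (1 + (v == c)) :> nat.
  by rewrite ffunE; case: (v == c); rewrite inordK.
have hf : is_rdrd e f.
  apply/forallP => v; rewrite fE; case: (eqVneq v c) => [//|vc] /=.
  rewrite andbT; apply/existsP; exists c; rewrite inE sym hc1 //= fE eqxx.
  done.
have := gamma_rdR_le hf.
have -> : weight f = #|T| + 1.
  rewrite /weight (eq_bigr (fun v => (true : nat) + (v == c))); last by move=> v _; rewrite fE.
  rewrite big_split /= !sum_ind.
  have -> : [set v | v == c] = [set c] by apply/setP => v; rewrite !inE.
  by rewrite sum_nat_const muln1 cards1.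
lia.
Qed.

Lemma r2_rev (T : finType) (e : rel T) :
  gamma_rdR e <= 2 * gamma_r2 e.
Proof.
have [S [hS ->]] := gamma_r2_attain e.
set f : {ffun T -> 'I_4} := [ffun v => if v \in S then (inord 2 : 'I_4) else inord 0].
have fE v : f v = ((v \in S) + (v \in S)) :> nat.
  by rewrite ffunE; case: (v \in S); rewrite inordK.
have hf : is_rdrd e f.
  apply/forallP => v; rewrite fE; case vS: (v \in S) => //=.
  move/forallP/(_ v): hS; rewrite vS /= => /andP [h1 /existsP [u /andP [uS evu]]].
  apply/andP; split.
    rewrite andbT; apply/orP; left; apply: leq_trans h1 _; apply: subset_leq_card; apply/subsetP => u'.
    by rewrite !inE fE => /andP [-> ->].
  apply/existsP; exists u; rewrite inE evu fE /=.
  by move: uS; rewrite inE => /negbTE ->.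
have := gamma_rdR_le hf.
have -> : weight f = 2 * #|S|.
  rewrite /weight (eq_bigr (fun v => (v \in S : nat) + (v \in S))); last by move=> v _; rewrite fE.
  rewrite big_split /= !sum_ind.
  have -> : [set v | v \in S] = S by apply/setP => v; rewrite !inE.
  lia.
done.
Qed.

Unset Implicit Arguments.

Theorem theorem2p8 (T : finType) (e : rel T) :
  simple_graph e -> connected_graph e ->
  gamma e + gamma_r e <= gamma_rdR e /\
  (gamma_rdR e = gamma e + gamma_r e <->
     is_star e \/ (gamma_r2 e = gamma_r e /\ gamma_r e = gamma e)).
Proof.
move=> hs hc.
have gT : gamma e <= #|T| by apply: bigmin_le_d.
have grT : gamma_r e <= #|T| by apply: bigmin_le_d.
have part1 : gamma e + gamma_r e <= gamma_rdR e.
  rewrite /gamma_rdR; apply: (big_rec (fun x => gamma e + gamma_r e <= x)).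
    lia.
  move=> f x hf hx; rewrite leq_min hx andbT.
  have := ineq_f hf; rewrite weight_split; lia.
split => //; split; last first.
  move=> [st | [h1 h2]]; apply/eqP; rewrite eqn_leq part1 andbT.
    exact: star_rev.
  have := r2_rev e; lia.
move=> heq.
have [f [hf hw]] : exists f, is_rdrd e f /\ gamma_rdR e = weight f.
  case: (bigmin_cases (is_rdrd e) (@weight T) (3 * #|T|)) => [h|//].
  exfalso; move: heq; rewrite /gamma_rdR h; have := hc.1; lia.
have := ineq_f hf; have := gamma_le (S2_dom hf); have := gamma_r_le (S1_rdom hf).
have := weight_split f; rewrite -hw heq => hsplit h1 h2 _.
have c3 : #|S3 f| = 0 by lia.
have e1 : gamma_r e = #|S1 f| by lia.
have e2 : gamma e = #|S2 f| by lia.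
have no3 : forall u, f u != 3 :> nat.
  move=> u; apply/eqP => fu; move: c3; rewrite (cardsD1 u) inE fu //.
case: (boolP [exists v, f v == 1 :> nat]) => [/existsP [x /eqP fx] | hn].
  left.
  have gr := all_pos hs hc hf no3 e1 fx.
  have H := leaf_edge hs gr.
  have [u [exu fu]] := rdrd_one hf fx.
  case: (H x u exu) => hl.
    exact (star_of hs hc H exu hl).
  have eux : e u x by rewrite (hs.1 u x).
  exact (star_of hs hc H eux hl).
right.
have hr2 : is_restrained_2dominating e (S2 f).
  apply/forallP => t; apply/implyP; rewrite inE -leqNgt => ft.
  have ft0 : f t = 0 :> nat.
    move/existsPn/(_ t): hn; move: ft; case: (nat_of_ord (f t)) => [|[|]] //.
  have [w [etw fw]] := rdrd_zero_zero hf ft0.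
  apply/andP; split.
    apply: leq_trans (rdrd_zero_two hf no3 ft0) _; apply: subset_leq_card.
    by apply/subsetP => u; rewrite !inE => /andP [-> /eqP ->].
  by apply/existsP; exists w; rewrite !inE fw etw.
have := gamma_r2_le hr2; have := gamma_le_r e; have := gamma_r_le_r2 e; lia.
Qed.
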